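(* Let $p$ be a prime, let $n\geqslant 2$ be an integer, let $m\geqslant 0$ be an integer and let $k\geqslant 2$ be an integer not divisible by $p$. For positive integers $a,r$ let $w(a,r)=\frac{1}{r}\sum_{d\mid r}\mu(d)\,a^{r/d}$, where $\mu$ is the Möbius function. Then $$\frac{w(n^{p^m},k)}{p^m\, w(n,p^mk)} \geqslant 1 - \frac{k}{2n^{p^mk/2}}.$$ *)

(* Defs.v *)
From mathcomp Require Import all_boot all_order all_algebra.
From mathcomp Require Import reals.
Set Implicit Arguments. Unset Strict Implicit. Unset Printing Implicit Defensive.
Import Order.TTheory GRing.Theory Num.Theory.
Local Open Scope ring_scope.

Definition moebius (d : nat) : int :=
  if all (fun q => logn q d == 1%N) (primes d) then (-1) ^+ size (primes d) else 0.

Definition necklace_w (R : realType) (a r : nat) : R :=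
  (r%:R)^-1 * \sum_(d <- divisors r) (moebius d)%:~R * ((a ^ (r %/ d))%N)%:R.

(* Main.v *)
Require Import Defs.
From mathcomp Require Import all_boot all_order all_algebra.
From mathcomp Require Import reals.
From mathcomp Require Import zify ring lra.
Import Order.TTheory GRing.Theory Num.Theory.
Local Open Scope ring_scope.

Lemma mob1 : moebius 1 = 1.
Proof. by []. Qed.

Lemma mob_p_dvd p e : prime p -> (0 < e)%N -> (p %| e)%N -> moebius (p * e) = 0.
Proof.
move=> pp e0 pe; rewrite /moebius; case: ifP => // /allP H.
have pe0 : (0 < p * e)%N by rewrite muln_gt0 prime_gt0.
have := H p; rewrite mem_primes pp pe0 dvdn_mulr //= => /(_ isT) /eqP.
rewrite (lognM _ (prime_gt0 pp) e0) logn_prime // eqxx.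
have : (0 < logn p e)%N by rewrite logn_gt0 mem_primes pp e0 pe.
by case: (logn p e).
Qed.

Lemma mob_p_ndvd p e : prime p -> (0 < e)%N -> ~~ (p %| e)%N ->
  moebius (p * e) = - moebius e.
Proof.
move=> pp e0 pe.
have pe0 : (0 < p * e)%N by rewrite muln_gt0 prime_gt0.
have pr : perm_eq (primes (p * e)) (p :: primes e).
  apply: uniq_perm; first exact: primes_uniq.
    by rewrite cons_uniq primes_uniq mem_primes pp e0 (negbTE pe) !andbF.
  move=> q; rewrite (primesM _ (prime_gt0 pp) e0) primes_prime // in_cons inE.
  by rewrite in_nil orbF.
rewrite /moebius (perm_all _ pr) (perm_size pr) /=.
rewrite (lognM _ (prime_gt0 pp) e0) logn_prime // eqxx logn_coprime ?prime_coprime //=.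
have -> : all (fun q => logn q (p * e) == 1%N) (primes e) =
          all (fun q => logn q e == 1%N) (primes e).
  apply: eq_in_all => q; rewrite mem_primes => /and3P [qp _ qe].
  rewrite (lognM _ (prime_gt0 pp) e0) logn_prime //.
  have qp' : q != p by apply: contraNneq pe => <-.
  by rewrite (negbTE qp').
by case: ifP => _; rewrite ?oppr0 // exprS mulN1r.
Qed.

Lemma mob_norm d : `|moebius d| <= 1.
Proof. by rewrite /moebius; case: ifP => _; rewrite ?normrX ?normrN1 ?expr1n. Qed.

Lemma two_exp u : (2 * u <= 2 ^ u)%N.
Proof.
elim: u => // u IH; rewrite expnS mulnS; have := ltn_expl u (isT : (1 < 2)%N).
lia.
Qed.

Lemma tail_bound a r : (2 <= a)%N -> (0 < r)%N ->
  (\sum_(d <- divisors r | d != 1%N) a ^ (r %/ d) < a ^ r)%N.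
Proof.
move=> a2 r0.
have a0 : (0 < a)%N by lia.
apply: (@leq_ltn_trans (\sum_(d <- divisors r | d != 1%N) a ^ (r./2))).
  rewrite big_seq_cond [X in (_ <= X)%N]big_seq_cond; apply: leq_sum => d.
  case/andP; rewrite -dvdn_divisors // => dr d1.
  apply: leq_pexp2l => //; rewrite -divn2; apply: leq_div2l => //.
  have d0 : (0 < d)%N by move: dr; case: (d) => //; rewrite dvd0n => /eqP; lia.
  lia.
rewrite big_const_seq iter_addn_0.
have cnt : (count (fun d => d != 1%N) (divisors r) <= r - 1)%N.
  rewrite -size_filter -[(r - 1)%N](size_iota 2).
  apply: uniq_leq_size; first by rewrite filter_uniq // divisors_uniq.
  move=> d; rewrite mem_filter -dvdn_divisors // mem_iota => /andP [d1 dr].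
  have d0 : (0 < d)%N by move: dr; case: (d) => //; rewrite dvd0n => /eqP; lia.
  have := dvdn_leq r0 dr; lia.
set h := r./2; set u := uphalf r.
have ru : r = (h + u)%N by rewrite /u /h uphalf_half addnC -addnA addnn odd_double_half.
have r2u : (r <= 2 * u)%N.
  rewrite /u uphalf_half -[r in (r <= _)%N]odd_double_half -addnn; case: (odd r); lia.
have ua : (2 ^ u <= a ^ u)%N by rewrite leq_exp2r // uphalf_gt0.
have r1 : (r - 1 < a ^ u)%N by have := two_exp u; lia.
rewrite [in X in (_ < X)%N]ru expnD ltn_pmul2l ?expn_gt0 ?a0 //.
exact: leq_ltn_trans cnt r1.
Qed.

Lemma coprime_part (V : nmodType) p j k (H : nat -> V) : prime p -> (0 < k)%N ->
  ~~ (p %| k)%N ->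
  \sum_(d <- divisors (p ^ j * k) | ~~ (p %| d)%N) H d = \sum_(d <- divisors k) H d.
Proof.
move=> pp k0 pk; rewrite -big_filter; apply: perm_big; apply: uniq_perm.
- by rewrite filter_uniq // divisors_uniq.
- exact: divisors_uniq.
have L0 : (0 < p ^ j * k)%N by rewrite muln_gt0 expn_gt0 prime_gt0.
move=> d; rewrite mem_filter -!dvdn_divisors //.
case pd: (p %| d)%N => /=.
  by apply/esym/negP => dk; rewrite (dvdn_trans pd dk) in pk.
rewrite Gauss_dvdr //; apply: coprimeXr; rewrite coprime_sym prime_coprime //.
by rewrite pd.
Qed.

Lemma split_p (V : nmodType) p L (F : nat -> V) : prime p -> (0 < L)%N -> (p %| L)%N ->
  \sum_(d <- divisors L) F d =
  \sum_(d <- divisors L | ~~ (p %| d)%N) F d + \sum_(e <- divisors (L %/ p)%N) F (p * e)%N.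
Proof.
move=> pp L0 pL; have p0 := prime_gt0 pp.
rewrite (bigID (fun d => ~~ (p %| d)%N)) /=; congr (_ + _).
rewrite -big_filter -(big_map (muln p) predT); apply: perm_big; apply: uniq_perm.
- by rewrite filter_uniq // divisors_uniq.
- rewrite map_inj_uniq ?divisors_uniq // => a b /eqP; rewrite eqn_pmul2l //.
  by move/eqP.
have Lp0 : (0 < L %/ p)%N by rewrite divn_gt0 // dvdn_leq.
have LE : L = (p * (L %/ p))%N by rewrite mulnC divnK.
move=> d; rewrite mem_filter negbK -dvdn_divisors //.
apply/idP/idP.
- case/andP => pd dL; apply/mapP; exists (d %/ p)%N.
    rewrite -dvdn_divisors // -(dvdn_pmul2l p0) -LE.
    by rewrite mulnC divnK.
  by rewrite mulnC divnK.
- case/mapP => e; rewrite -dvdn_divisors // => eL ->.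
  by rewrite dvdn_mulr //= {1}LE dvdn_pmul2l.
Qed.
Arguments split_p {V p L} F.

Definition S (R : realFieldType) (a r : nat) : R :=
  \sum_(d <- divisors r) (moebius d)%:~R * ((a ^ (r %/ d))%N)%:R.

Lemma S_pos (R : realFieldType) a r : (2 <= a)%N -> (0 < r)%N -> 0 < S R a r.
Proof.
move=> a2 r0; rewrite /S (bigD1_seq 1%N) ?divisor1 ?divisors_uniq //= mob1 mul1r divn1.
set X := \sum_(_ <- _ | _) _.
have H : `|X| <= (\sum_(d <- divisors r | d != 1%N) a ^ (r %/ d))%N%:R.
  apply: le_trans (ler_norm_sum _ _ _) _; rewrite natr_sum; apply: ler_sum => d _.
  rewrite normrM normr_nat; apply: ler_piMl => //.
  by rewrite -intr_norm lerz1 mob_norm.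
have T := @tail_bound a r a2 r0; rewrite -(ltr_nat R) in T.
have N : - X <= `|X| by rewrite -normrN ler_norm.
lra.
Qed.

Lemma S_split (R : realFieldType) p j k n : prime p -> (0 < k)%N -> ~~ (p %| k)%N ->
  S R n (p ^ j.+1 * k) = S R (n ^ (p ^ j.+1)) k - S R (n ^ (p ^ j)) k.
Proof.
move=> pp k0 pk; have p0 := prime_gt0 pp.
have L0 : (0 < p ^ j.+1 * k)%N by rewrite muln_gt0 expn_gt0 p0.
have pL : (p %| p ^ j.+1 * k)%N by rewrite expnS -mulnA dvdn_mulr.
have LpE : ((p ^ j.+1 * k) %/ p = p ^ j * k)%N by rewrite expnS -mulnA mulKn.
rewrite /S (split_p _ pp L0 pL) LpE coprime_part //.
congr (_ + _).
  apply: eq_big_seq => d; rewrite -dvdn_divisors // => dk.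
  by rewrite -expnM muln_divA.
rewrite -sumrN (bigID (fun e => (p %| e)%N)) /= big1_seq ?add0r; last first.
  move=> e /andP [pe]; rewrite -dvdn_divisors ?muln_gt0 ?expn_gt0 ?p0 // => ek.
  have e0 : (0 < e)%N by apply: dvdn_gt0 ek; rewrite muln_gt0 expn_gt0 p0.
  by rewrite mob_p_dvd // mulr0z mul0r.
rewrite coprime_part //; apply: eq_big_seq => e; rewrite -dvdn_divisors // => ek.
have e0 : (0 < e)%N by apply: dvdn_gt0 ek.
have pe : ~~ (p %| e)%N by apply: contra pk => pe; exact: dvdn_trans pe ek.
rewrite mob_p_ndvd // mulrNz mulNr; congr (- (_ * _)).
by rewrite expnS -mulnA divnMl // -muln_divA // expnM.
Qed.

Theorem lemma2p5 (R : realType) (p n m k : nat) :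
  prime p -> (2 <= n)%N -> (2 <= k)%N -> ~~ (p %| k)%N ->
  1 - (k%:R : R) / (2 * Num.sqrt (((n ^ (p ^ m * k))%N)%:R))
    <= necklace_w R (n ^ (p ^ m)) k / (((p ^ m)%N)%:R * necklace_w R n (p ^ m * k)).
Proof.
move=> pp n2 k2 pk.
have k0 : (0 < k)%N by lia.
have n0 : (0 < n)%N by lia.
have p0 := prime_gt0 pp.
have NW a r : necklace_w R a r = r%:R^-1 * S R a r by [].
rewrite !NW.
have Bpos : 0 < S R n (p ^ m * k) by apply: S_pos; rewrite // muln_gt0 expn_gt0 p0.
have key : S R n (p ^ m * k) <= S R (n ^ (p ^ m)) k.
  case: m Bpos => [|j] Bpos; first by rewrite expn0 mul1n expn1.
  rewrite S_split //.
  have : 0 < S R (n ^ (p ^ j)) k.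
    apply: S_pos => //; apply: leq_trans n2 _.
    rewrite -{1}(expn1 n); apply: leq_pexp2l; [exact: n0 | by rewrite expn_gt0 p0].
  move=> ?; lra.
have le1 : 1 - (k%:R : R) / (2 * Num.sqrt (((n ^ (p ^ m * k))%N)%:R)) <= 1.
  by rewrite lerBlDr lerDl divr_ge0 // mulr_ge0 // sqrtr_ge0.
apply: le_trans le1 _.
have kR : (k%:R : R) != 0 by rewrite pnatr_eq0 -lt0n.
have pR : ((p ^ m)%N%:R : R) != 0 by rewrite pnatr_eq0 -lt0n expn_gt0 p0.
have -> : (k%:R^-1 * S R (n ^ p ^ m) k) / ((p ^ m)%N%:R * ((p ^ m * k)%N%:R^-1 * S R n (p ^ m * k)))
  = S R (n ^ p ^ m) k / S R n (p ^ m * k).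
  rewrite natrM; field; rewrite kR pR /=; apply/andP; split => //.
  by rewrite gt_eqF.
by rewrite ler_pdivlMr // mul1r.
Qed.
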